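(* Let $\mathcal A=\{r_0,\dots,r_m\}\subset\mathbb Z^n$ with $\mathbb Z\mathcal A=\mathbb Z^n$ and $k\in\mathbb N$. Then $\operatorname{trop}(X^{(k)}_{\mathcal A})$ is empty (equivalently, $X^{(k)}_{\mathcal A}$ does not intersect the torus $T_m=\{x\in(\mathbb P^m)^\vee: x_i\ne0\text{ for all }i\}$) if and only if there exists a polynomial $Q$ in $n$ variables of degree at most $k$ which vanishes at all points of $\mathcal A$ but one.
   Context: $X_{\mathcal A}\subset\mathbb P^m$ is the closure of the image of $(\mathbb C^* )^n\to\mathbb P^m$, $x\mapsto(x^{r_0}:\dots:x^{r_m})$. $X^{(k)}_{\mathcal A}\subset(\mathbb P^m)^\vee$ is its $k$-th dual variety: the closure of the set of hyperplanes containing the $k$-th osculating space $\mathbb P(\operatorname{Im}j_{k,x})$ at some smooth point $x$, where $j_{k,x}$ is the Taylor expansion to order $k$. For a projective variety $X\subset\mathbb P^m$ with affine cone $Y$ and ideal $I$ defined over $\mathbb Q$, $\operatorname{trop}(Y)=\{w\in\mathbb R^{m+1}:\operatorname{in}_w(F)\text{ is not a monomial for all }0\ne F\in I\}$ and $\operatorname{trop}(X)$ is the image of $\operatorname{trop}(Y)$ in $\mathbb R^{m+1}/\mathbb R(1,\dots,1)$. *)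

(* Defs.v *)
From HB Require Import structures.
From mathcomp Require Import all_boot all_order all_algebra.
From mathcomp Require Import multinomials.mpoly.
From mathcomp.real_closed Require Import complex.
From mathcomp Require Import Rstruct.
From Stdlib Require Rdefinitions.

Set Implicit Arguments.
Unset Strict Implicit.
Unset Printing Implicit Defensive.

Import GRing.Theory Num.Theory.
Local Open Scope ring_scope.

Notation RR := Rdefinitions.R.
Notation CC := (complex Rdefinitions.R).

(* A finite point configuration A = {r_0, ..., r_m} in Z^n, given as an
   indexing r : 'I_(m.+1) -> 'rV[int]_n (assumed injective in the theorem). *)

Definition lattice_generates (n m : nat) (r : 'I_m.+1 -> 'rV[int]_n) : Prop :=
  forall v : 'rV[int]_n, exists c : 'I_m.+1 -> int,
    v = \sum_(i < m.+1) c i *: r i.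

Definition lmono (n : nat) (x : 'I_n -> CC) (a : 'rV[int]_n) : CC :=
  \prod_(j < n) x j ^ (a ord0 j).

Definition ffz (a : int) (l : nat) : int := \prod_(t < l) (a - t%:Z).

(* The partial derivative d^alpha (x^a) of the Laurent monomial x^a
   (alpha a multi-index in N^n), evaluated at x:
   d^alpha x^a = (prod_j ffz a_j alpha_j) x^(a - alpha). *)
Definition dmono (n : nat) (alpha : 'I_n -> nat) (a : 'rV[int]_n)
  (x : 'I_n -> CC) : CC :=
  (\prod_(j < n) ffz (a ord0 j) (alpha j))%:~R *
  lmono x (a - \row_j (alpha j)%:Z).

(* The map phi : (C^* )^n -> C^(m+1), x |-> (x^r_0, ..., x^r_m).  Its
   Taylor expansion to order k at x, j_{k,x}, has image spanned by the
   partial derivatives d^alpha phi (x) with |alpha| <= k.  A hyperplane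
   {sum_i c_i y_i = 0} contains the k-th osculating space
   P(Im j_{k,x}) iff c annihilates all these derivative vectors. *)
Definition osculates (n m k : nat) (r : 'I_m.+1 -> 'rV[int]_n)
  (x : 'I_n -> CC) (c : 'I_m.+1 -> CC) : Prop :=
  forall alpha : 'I_n -> nat, (\sum_(j < n) alpha j <= k)%N ->
    \sum_(i < m.+1) c i * dmono alpha (r i) x = 0.

(* Affine-cone version of the set of hyperplanes containing the k-th
   osculating space at some point x of the dense torus orbit of X_A
   (all such points are smooth). *)
Definition osc_cone (n m k : nat) (r : 'I_m.+1 -> 'rV[int]_n)
  (c : 'I_m.+1 -> CC) : Prop :=
  exists x : 'I_n -> CC, (forall j, x j != 0) /\ osculates k r x c.

(* The ideal of the affine cone Y of X^(k)_A (= Zariski closure of the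
   cone above): all polynomials vanishing on osc_cone. *)
Definition dual_ideal (n m k : nat) (r : 'I_m.+1 -> 'rV[int]_n)
  (F : {mpoly CC[m.+1]}) : Prop :=
  forall c, osc_cone k r c -> F.@[c] = 0.

Definition mweight (N : nat) (w : 'I_N -> RR) (e : 'X_{1.. N}) : RR :=
  \sum_(i < N) w i * (e i)%:R.

Definition init_form (N : nat) (w : 'I_N -> RR) (F : {mpoly CC[N]})
  : {mpoly CC[N]} :=
  \sum_(e <- msupp F |
        all (fun e' => mweight w e <= mweight w e') (msupp F))
     F@_e *: 'X_[e].

Definition is_monomial (N : nat) (G : {mpoly CC[N]}) : Prop :=
  exists (a : CC) (e : 'X_{1.. N}), a != 0 /\ G = a *: 'X_[e].

Definition trop_cone (n m k : nat) (r : 'I_m.+1 -> 'rV[int]_n)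
  (w : 'I_m.+1 -> RR) : Prop :=
  forall F : {mpoly CC[m.+1]}, dual_ideal k r F -> F != 0 ->
    ~ is_monomial (init_form w F).

(* trop(X^(k)_A) is the image of trop(Y) in R^(m+1)/R(1,...,1); it is
   empty iff trop(Y) is empty. *)
Definition trop_dual_empty (n m k : nat) (r : 'I_m.+1 -> 'rV[int]_n) : Prop :=
  forall w : 'I_m.+1 -> RR, ~ trop_cone k r w.

Definition eval_int (n : nat) (Q : {mpoly CC[n]}) (a : 'rV[int]_n) : CC :=
  Q.@[fun j => (a ord0 j)%:~R].

(* Main.v *)
Require Import Defs.
From HB Require Import structures.
From mathcomp Require Import all_boot all_order all_algebra.
From mathcomp Require Import multinomials.mpoly.
From mathcomp.real_closed Require Import complex.
From mathcomp Require Import Rstruct.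
From mathcomp Require Import ring lra zify.
Import Order.TTheory GRing.Theory Num.Theory.
Local Open Scope ring_scope.
Set Implicit Arguments.
Unset Strict Implicit.
Unset Printing Implicit Defensive.
From Stdlib Require Import Classical_Prop.

Definition full (N : nat) (c : 'I_N -> CC) := forall i, c i != 0.

Lemma init_form0 (N : nat) (F : {mpoly CC[N]}) : init_form (fun _ => 0%R) F = F.
Proof.
rewrite /init_form.
have H0 : forall e, Defs.mweight (fun _ : 'I_N => 0%R) e = 0%R.
  by move=> e; rewrite /Defs.mweight big1 // => i _; rewrite GRing.mul0r.
rewrite [RHS]mpolyE; apply: eq_bigl => e; rewrite H0.
by apply/allP => e' _; rewrite H0.
Qed.

Lemma init_formX (N : nat) w (e : 'X_{1..N}) : init_form w 'X_[e] = 'X_[e].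
Proof.
rewrite /init_form msuppX big_cons big_nil /= lexx /= mcoeffX eqxx scale1r addr0 //.
Qed.

Lemma mX_neq0 (N : nat) (e : 'X_{1..N}) : ('X_[e] : {mpoly CC[N]}) != 0.
Proof. by rewrite -msize_poly_eq0 msizeX. Qed.

Lemma tropA (n m k : nat) (r : 'I_m.+1 -> 'rV[int]_n) :
  trop_dual_empty k r <-> ~ (exists c, full c /\ osc_cone k r c).
Proof.
split.
- move=> H [c [fc oc]]; apply: (H (fun _ => 0%R)) => F HF Fn0.
  rewrite init_form0 => -[a [e [an0 Fe]]].
  have := HF c oc; rewrite Fe mevalZ mevalX.
  apply/eqP; rewrite mulf_eq0 negb_or an0 /=.
  by rewrite prodf_seq_neq0; apply/allP => i _; rewrite expf_neq0.
- move=> Hn w Ht.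
  pose e : 'X_{1..m.+1} := [multinom 1%N | i < m.+1].
  apply: (Ht 'X_[e]); last first.
  + by rewrite init_formX; exists 1, e; rewrite scale1r oner_neq0.
  + exact: mX_neq0.
  move=> c oc; rewrite mevalX.
  have : ~~ [forall i, c i != 0].
    by apply/negP => /forallP fc; apply: Hn; exists c.
  rewrite negb_forall; case/existsP => i; rewrite negbK => /eqP ci.
  by rewrite (bigD1 i) //= ci mnmE expr1 mul0r.
Qed.

Definition ffc (n : nat) (alpha : 'I_n -> nat) (a : 'rV[int]_n) : CC :=
  (\prod_(j < n) ffz (a ord0 j) (alpha j))%:~R.

Definition Ker (n m k : nat) (r : 'I_m.+1 -> 'rV[int]_n) (c : 'I_m.+1 -> CC) :=
  forall alpha : 'I_n -> nat, (\sum_(j < n) alpha j <= k)%N ->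
    \sum_(i < m.+1) c i * ffc alpha (r i) = 0.

Lemma lmonoD n (x : 'I_n -> CC) a b : (forall j, x j != 0) ->
  lmono x (a + b) = lmono x a * lmono x b.
Proof.
move=> xn; rewrite /lmono -big_split /=; apply: eq_bigr => j _.
by rewrite mxE expfzDr.
Qed.

Lemma lmono_neq0 n (x : 'I_n -> CC) a : (forall j, x j != 0) -> lmono x a != 0.
Proof.
by move=> xn; rewrite /lmono prodf_seq_neq0; apply/allP => j _; rewrite expfz_neq0.
Qed.

Lemma lmono1 n a : lmono (fun _ : 'I_n => 1) a = 1.
Proof. by rewrite /lmono big1 // => j _; rewrite exp1rz. Qed.

Lemma tropB (n m k : nat) (r : 'I_m.+1 -> 'rV[int]_n) :
  (exists c, full c /\ osc_cone k r c) <-> (exists c, full c /\ Ker k r c).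
Proof.
split.
- move=> [c [fc [x [xn oc]]]].
  exists (fun i => c i * lmono x (r i)); split.
    by move=> i; rewrite mulf_neq0 // lmono_neq0.
  move=> alpha Ha; have := oc alpha Ha.
  rewrite /dmono.
  under eq_bigr => i _ do rewrite (lmonoD _ _ xn).
  set L := lmono x _.
  have -> : \sum_(i < m.+1) c i * ((\prod_(j < n) ffz (r i ord0 j) (alpha j))%:~R *
      (lmono x (r i) * L)) = (\sum_(i < m.+1) c i * lmono x (r i) * ffc alpha (r i)) * L.
    rewrite mulr_suml; apply: eq_bigr => i _; rewrite /ffc; ring.
  by move/eqP; rewrite mulf_eq0 (negbTE (lmono_neq0 _ xn)) orbF => /eqP.
- move=> [c [fc kc]]; exists c; split => //; exists (fun _ => 1); split.
    by move=> j; exact: oner_neq0.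
  move=> alpha Ha; apply: etrans (kc alpha Ha); apply: eq_bigr => i _.
  by rewrite /dmono lmono1 mulr1.
Qed.

Definition mono (n : nat) (beta : 'I_n -> nat) (a : 'rV[int]_n) : CC :=
  \prod_(j < n) ((a ord0 j)%:~R) ^+ beta j.

Definition upd (n : nat) (f : 'I_n -> nat) (j : 'I_n) (v : nat) : 'I_n -> nat :=
  fun l => if l == j then v else f l.

Lemma prod_upd (R : comRingType) n (g : 'I_n -> nat -> R) f j v :
  \prod_l g l (upd f j v l) = g j v * \prod_(l | l != j) g l (f l).
Proof.
rewrite (bigD1 j) //= /upd eqxx; congr (_ * _); apply: eq_bigr => l /negbTE ->//.
Qed.

Lemma sum_upd n (f : 'I_n -> nat) j v :
  (\sum_l upd f j v l = v + \sum_(l | l != j) f l)%N.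
Proof.
rewrite (bigD1 j) //= /upd eqxx; congr (_ + _)%N; apply: eq_bigr => l /negbTE ->//.
Qed.

Lemma ffcE n alpha (a : 'rV[int]_n) :
  ffc alpha a = \prod_j ((ffz (a ord0 j) (alpha j))%:~R : CC).
Proof. by rewrite /ffc rmorph_prod. Qed.

Lemma ffzS (a : int) l : ffz a l.+1 = ffz a l * (a - l%:Z).
Proof. by rewrite /ffz big_ord_recr. Qed.

Lemma good_aux (n m k : nat) (r : 'I_m.+1 -> 'rV[int]_n) c : Ker k r c ->
  forall d beta alpha, (\sum_j beta j = d)%N -> (\sum_j alpha j + d <= k)%N ->
  \sum_(i < m.+1) c i * (ffc alpha (r i) * mono beta (r i)) = 0.
Proof.
move=> kc; elim=> [|d IH] beta alpha Hb Ha.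
  have b0 : forall j, beta j = 0%N.
    move=> j; apply/eqP; move: Hb => /eqP; rewrite sum_nat_eq0 => /forallP /(_ j).
    by [].
  rewrite addn0 in Ha; rewrite -[RHS](kc alpha Ha); apply: eq_bigr => i _.
  by rewrite /mono big1 ?mulr1 // => j _; rewrite b0 expr0.
have [j bj] : exists j, (0 < beta j)%N.
  apply/existsP; apply: contraT; rewrite negb_exists => /forallP H.
  have : (\sum_j beta j == 0)%N by rewrite sum_nat_eq0; apply/forallP => j; have := H j; rewrite lt0n negbK.
  by rewrite Hb.
pose beta' := upd beta j (beta j).-1.
pose alpha' := upd alpha j (alpha j).+1.
have Sb : (\sum_l beta l = (beta j).-1.+1 + \sum_(l | l != j) beta l)%N.
  by rewrite (bigD1 j) //= prednK.
have Hb' : (\sum_l beta' l = d)%N.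
  by rewrite sum_upd; apply/eqP; rewrite -eqSS -addSn -Sb Hb.
have Ha' : (\sum_l alpha' l + d <= k)%N.
  rewrite sum_upd addSn -addnS; apply: leq_trans (Ha); rewrite [X in (_ <= X + _)%N](bigD1 j) //=; lia.
have Ha2 : (\sum_l alpha l + d <= k)%N by rewrite (leq_trans _ Ha) // leq_add2l.
have E : forall i, ffc alpha (r i) * mono beta (r i) =
   ffc alpha' (r i) * mono beta' (r i) + (alpha j)%:R * (ffc alpha (r i) * mono beta' (r i)).
  move=> i; rewrite !ffcE /mono /alpha' /beta'.
  rewrite (prod_upd (fun l x => ((ffz (r i ord0 l) x)%:~R : CC))).
  rewrite (prod_upd (fun l x => ((r i ord0 l)%:~R : CC) ^+ x)).
  rewrite (bigD1 j (F := fun l => ((r i ord0 l)%:~R : CC) ^+ beta l)) //=.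
  rewrite (bigD1 j (F := fun l => ((ffz (r i ord0 l) (alpha l))%:~R : CC))) //= ffzS.
  rewrite -{1}(prednK bj) exprS rmorphM rmorphB /=.
  set P := \prod_(l | l != j) _ ; set Q := \prod_(l | l != j) _.
  rewrite -pmulrn; ring.
under eq_bigr => i _ do rewrite E mulrDr.
rewrite big_split /= (IH beta' alpha' Hb' Ha') add0r.
rewrite (eq_bigr (fun i => (alpha j)%:R * (c i * (ffc alpha (r i) * mono beta' (r i))))); last by move=> i _; ring.
by rewrite -mulr_sumr (IH beta' alpha Hb' Ha2) mulr0.
Qed.

Lemma ffc0 n (a : 'rV[int]_n) : ffc (fun _ => 0%N) a = 1.
Proof. by rewrite /ffc big1 // => j _; rewrite /ffz big_ord0. Qed.

Lemma good (n m k : nat) (r : 'I_m.+1 -> 'rV[int]_n) c (Q : {mpoly CC[n]}) :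
  Ker k r c -> (msize Q <= k.+1)%N ->
  \sum_(i < m.+1) c i * eval_int Q (r i) = 0.
Proof.
move=> kc HQ.
rewrite /eval_int.
under eq_bigr => i _ do rewrite mevalE mulr_sumr.
rewrite exchange_big /= big1_seq // => e /andP [_ eQ].
have He : (\sum_j (e j) <= k)%N.
  by rewrite -mdegE -ltnS (leq_trans (msize_mdeg_lt eQ)).
have := good_aux kc (erefl _) (alpha := fun _ => 0%N) (beta := fun j => e j).
rewrite big1 // add0n => /(_ He) H.
rewrite -[RHS](mulr0 (Q@_e)) -[X in _ = _ * X]H mulr_sumr; apply: eq_bigr => i _.
by rewrite ffc0 mul1r /mono mulrCA.
Qed.


Definition FFQ (n : nat) (alpha : 'I_n -> nat) : {mpoly CC[n]} :=
  \prod_(j < n) \prod_(t < alpha j) ('X_j - (t%:R)%:MP).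

Lemma FFQ_eval n alpha (a : 'rV[int]_n) : eval_int (FFQ alpha) a = ffc alpha a.
Proof.
rewrite /eval_int /FFQ ffcE rmorph_prod; apply: eq_bigr => j _.
rewrite rmorph_prod /ffz rmorph_prod; apply: eq_bigr => t _.
by rewrite rmorphB /= mevalXU mevalC rmorphB /= -pmulrn.
Qed.

Lemma msize_prod_le (n : nat) (T : Type) (s : seq T) (F : T -> {mpoly CC[n]}) :
  (msize (\prod_(x <- s) F x) <= (\sum_(x <- s) (msize (F x)).-1).+1)%N.
Proof.
elim: s => [|x s IH]; first by rewrite !big_nil msize1.
rewrite !big_cons.
have [->|nx] := eqVneq (F x) 0; first by rewrite mul0r msize0.
have [->|ns] := eqVneq (\prod_(y <- s) F y) 0; first by rewrite mulr0 msize0.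
rewrite msizeM //.
have : (0 < msize (F x))%N by rewrite lt0n msize_poly_eq0.
case: (msize (F x)) => //= a _.
by rewrite -addnS leq_add2l.
Qed.

Lemma msize_lin n (j : 'I_n) (c : CC) : (msize ('X_j - c%:MP : {mpoly CC[n]}) <= 2)%N.
Proof.
apply: leq_trans (msizeD_le _ _) _; rewrite geq_max msizeX mdeg1 /= msizeN msizeC.
by case: (c != 0).
Qed.

Lemma msize_FFQ n alpha : (msize (FFQ alpha) <= (\sum_(j < n) alpha j).+1)%N.
Proof.
apply: leq_trans (msize_prod_le _ _) _; rewrite ltnS; apply: leq_sum => j _.
have H := msize_prod_le (index_enum 'I_(alpha j)) (fun t : 'I_(alpha j) => 'X_j - (t%:R)%:MP : {mpoly CC[n]}).
rewrite -subn1 leq_subLR add1n.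
apply: leq_trans H _; rewrite ltnS.
rewrite -[X in (_ <= X)%N]card_ord -sum1_card; apply: leq_sum => t _.
by rewrite -subn1 leq_subLR add1n msize_lin.
Qed.

Lemma Ker_comb n m k (r : 'I_m.+1 -> 'rV[int]_n) c d (t : CC) :
  Ker k r c -> Ker k r d -> Ker k r (fun i => c i + t * d i).
Proof.
move=> kc kd alpha Ha.
under eq_bigr => i _ do rewrite mulrDl -mulrA.
by rewrite big_split /= -mulr_sumr kc // kd // mulr0 addr0.
Qed.

Lemma avoid (N : nat) (bad : 'I_N -> CC) : exists t : CC, forall l, t != bad l.
Proof.
have : ~~ all (fun x => x \in map bad (enum 'I_N)) (map (fun j => (j%:R : CC)) (iota 0 N.+1)).
  apply/negP => /allP H.
  have U : uniq (map (fun j => (j%:R : CC)) (iota 0 N.+1)).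
    rewrite map_inj_uniq ?iota_uniq // => x y /eqP; rewrite eqr_nat => /eqP.
    done.
  have := uniq_leq_size U H.
  by rewrite !size_map size_iota -enumT size_enum_ord ltnn.
case/allPn => x /mapP [j _ ->] nb; exists j%:R => l; apply: contra nb => /eqP ->.
by apply: map_f; rewrite mem_enum.
Qed.

Lemma combine n m k (r : 'I_m.+1 -> 'rV[int]_n) :
  (forall i0, exists c, Ker k r c /\ c i0 != 0) -> exists c, full c /\ Ker k r c.
Proof.
move=> H.
have : forall s : seq 'I_m.+1, exists c, Ker k r c /\ forall l, l \in s -> c l != 0.
  elim=> [|i s [c [kc cs]]].
    exists (fun _ => 0); split => // alpha _; by rewrite big1 // => i _; rewrite mul0r.
  have [d [kd di]] := H i.
  have [t tb] := avoid (fun l => - c l / d l).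
  exists (fun l => c l + t * d l); split; first exact: Ker_comb.
  move=> l; rewrite inE => ls.
  have [dl0|dln] := eqVneq (d l) 0.
    rewrite dl0 mulr0 addr0; apply: cs.
    case/orP: ls => // /eqP el; by rewrite -el dl0 eqxx in di.
  apply: contra (tb l) => /eqP E.
  apply/eqP; rewrite -[t](mulfK dln) -[t * d l](addKr (c l)) E; ring.
case/(_ (enum 'I_m.+1)) => c [kc cs]; exists c; split => // i.
by apply: cs; rewrite mem_enum.
Qed.

Lemma sep n m k (r : 'I_m.+1 -> 'rV[int]_n) (i0 : 'I_m.+1) :
  ~ (exists c, Ker k r c /\ c i0 != 0) ->
  exists Q : {mpoly CC[n]}, (msize Q <= k.+1)%N /\
     eval_int Q (r i0) != 0 /\ forall i, i != i0 -> eval_int Q (r i) = 0.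
Proof.
move=> Hn.
pose av (p : {ffun 'I_n -> 'I_k.+1}) := fun j => nat_of_ord (p j).
pose valid p := (\sum_j av p j <= k)%N.
pose M : 'M[CC]_(#|{ffun 'I_n -> 'I_k.+1}|, m.+1) :=
  \matrix_(p, i) (if valid (enum_val p) then ffc (av (enum_val p)) (r i) else 0).
have sub : ((delta_mx 0 i0 : 'rV[CC]_m.+1) <= M)%MS.
  rewrite submxE; apply: contraT => nz; exfalso; apply: Hn.
  have [j Hj] : exists j, ((delta_mx 0 i0 : 'rV[CC]_m.+1) *m cokermx M) 0 j != 0.
    apply/existsP; apply: contraT; rewrite negb_exists => /forallP H0.
    exfalso; apply: (negP nz); apply/eqP/matrixP => a b.
    by rewrite ord1 [RHS]mxE; apply/eqP; apply: negbNE (H0 b).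
  rewrite -rowE mxE in Hj.
  exists (fun i => cokermx M i j); split => //.
  move=> alpha Ha.
  have aj : forall j, (alpha j < k.+1)%N.
    move=> j'; rewrite ltnS (leq_trans _ Ha) // (bigD1 j') //= leq_addr //.
  pose f : {ffun 'I_n -> 'I_k.+1} := [ffun j => inord (alpha j)].
  have avf : forall j', av f j' = alpha j'.
    by move=> j'; rewrite /av ffunE inordK.
  have vf : valid f.
    by rewrite /valid (eq_bigr alpha (fun j' _ => avf j')).
  have ff : forall a, ffc (av f) a = ffc alpha a.
    by move=> a; rewrite /ffc; congr (_ %:~R); apply: eq_bigr => j' _; rewrite avf.
  have := mulmx_coker M; move/matrixP/(_ (enum_rank f) j).
  rewrite !mxE /= => E; rewrite -[RHS]E; apply: eq_bigr => i _.
  by rewrite [M _ i]mxE enum_rankK vf ff mulrC.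
have [u Eu] := submxP sub.
pose QQ p := if valid p then FFQ (av p) else 0.
exists (\sum_p u 0 p *: QQ (enum_val p)).
have ev : forall i, eval_int (\sum_p u 0 p *: QQ (enum_val p)) (r i) = (i0 == i)%:R.
  move=> i; rewrite /eval_int raddf_sum /=.
  have := Eu; move/matrixP/(_ 0 i); rewrite !mxE eqxx /= => E; rewrite [in RHS]eq_sym E.
  apply: eq_bigr => p _; rewrite mevalZ mxE /QQ.
  by case: (valid _) => //; rewrite ?meval0 ?mulr0 // -FFQ_eval.
split; last split.
- apply: leq_trans (msize_sum _ _ _) _; apply/bigmax_leqP => p _.
  apply: leq_trans (msizeZ_le _ _) _; rewrite /QQ; case: ifP => vp.
    by apply: leq_trans (msize_FFQ _) _.
  by rewrite msize0.
- by rewrite ev eqxx oner_neq0.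
- by move=> i ni; rewrite ev eq_sym (negbTE ni).
Qed.

Theorem corollary5p6 (n m : nat) (r : 'I_m.+1 -> 'rV[int]_n) (k : nat) :
  injective r ->
  lattice_generates r ->
  (trop_dual_empty k r <->
   exists Q : {mpoly CC[n]}, (msize Q <= k.+1)%N /\
     exists i0 : 'I_m.+1, eval_int Q (r i0) != 0 /\
       forall i : 'I_m.+1, i != i0 -> eval_int Q (r i) = 0).
Proof.
move=> _ _; split.
- move=> H; apply: NNPP => nQ.
  apply: (proj1 (tropA k r) H); apply/tropB; apply: combine => i0.
  apply: NNPP => nc; apply: nQ.
  have [Q [HQ [H1 H2]]] := sep nc.
  by exists Q; split => //; exists i0.
- move=> [Q [HQ [i0 [H1 H2]]]].
  apply/tropA => /tropB [c [fc kc]].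
  have := good kc HQ; rewrite (bigD1 i0) //= big1 ?addr0.
    by apply/eqP; rewrite mulf_neq0.
  by move=> i ni; rewrite H2 // mulr0.
Qed.
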